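(* Suppose $\mathcal{C}$ is an $[n,k]_q$ MWS code satisfying property (B). Then there exists $r=(r_1,\dots,r_{q-1})\in\mathbb{N}^{q-1}$, $r\neq 0$, such that, with $R=r_1+\dots+r_{q-1}$, the generalized $r$-repetition code $\mathcal{C}(r)$ is an $[Rn,k]_q$ MWS code satisfying properties (A) and (B).
   Context: Fix a primitive element $\alpha$ of $\mathbb{F}_q$; $\mathbb{N}=\{0,1,2,\dots\}$. An $[n,k]_q$ code is a $k$-dimensional subspace of $\mathbb{F}_q^n$ (non-degenerate if $k\ge2$); it is MWS if it has exactly $\frac{q^k-1}{q-1}$ distinct non-zero Hamming weights. For $c\in\mathbb{F}_q^n$, $\beta\in\mathbb{F}_q$, $c[\beta]=|\{l:c_l=\beta\}|$ and $V(c)=(c[\alpha],\dots,c[\alpha^{q-1}],c[0])$. For $r\in\mathbb{N}^{q-1}$, the generalized $r$-repetition code is $\mathcal{C}(r)=\{c^r: c\in\mathcal{C}\}$, where $c^r$ is the concatenation of $r_1$ copies of $\alpha c$, then $r_2$ copies of $\alpha^2 c$, ..., then $r_{q-1}$ copies of $\alpha^{q-1}c$ (a vector of length $Rn$). Property (A) for a code $\mathcal{D}$: there exists $\beta\in\mathbb{F}_q^*$ such that for $a,b\in\mathcal{D}$, $a[\beta]=b[\beta]$ only if $a=b$. Property (B) for a code $\mathcal{D}$: for every $c\in\mathcal{D}\setminus\{0\}$ the entries of $V(c)$ are pairwise distinct. *)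

(* Defs.v *)
From HB Require Import structures.
From mathcomp Require Import all_boot all_order all_algebra all_field.
Set Implicit Arguments. Unset Strict Implicit. Unset Printing Implicit Defensive.
Import GRing.Theory.
Local Open Scope ring_scope.

(* Codes over F = F_q (q = #|F|) of length n are subspaces
   C : {vspace 'rV[F]_n}. *)

Section Codes.
Variable F : finFieldType.

Definition wt n (c : 'rV[F]_n) : nat := #|[set i : 'I_n | c 0 i != 0]|.

Definition cnt n (c : 'rV[F]_n) (b : F) : nat := #|[set i : 'I_n | c 0 i == b]|.

Definition Vvec (alpha : F) n (c : 'rV[F]_n) : seq nat :=
  rcons [seq cnt c (alpha ^+ i.+1) | i <- iota 0 #|F|.-1] (cnt c 0).

Definition nondegenerate n (C : {vspace 'rV[F]_n}) : Prop :=
  forall i : 'I_n, exists2 c, c \in C & c 0 i != 0.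

Definition is_code n k (C : {vspace 'rV[F]_n}) : Prop :=
  \dim C = k /\ ((2 <= k)%N -> nondegenerate C).

Definition num_weights n (C : {vspace 'rV[F]_n}) : nat :=
  size (undup [seq w <- [seq wt c | c in [pred c : 'rV[F]_n | c \in C]] | w != 0%N]).

Definition is_MWS n k (C : {vspace 'rV[F]_n}) : Prop :=
  is_code k C /\ num_weights C = ((#|F| ^ k - 1) %/ (#|F| - 1))%N.

Definition propA n (D : {vspace 'rV[F]_n}) : Prop :=
  exists2 b : F, b != 0 &
    forall a c, a \in D -> c \in D -> cnt a b = cnt c b -> a = c.

Definition propB alpha n (D : {vspace 'rV[F]_n}) : Prop :=
  forall c, c \in D -> c != 0 -> uniq (Vvec alpha c).

(* r = (r_1,...,r_{q-1}) is encoded as r : 'I_(q-1) -> nat, r_j = r (j-1) *)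
Definition Rsum (r : 'I_#|F|.-1 -> nat) : nat := (\sum_(j < #|F|.-1) r j)%N.

(* c^r : r_1 copies of alpha c, then r_2 copies of alpha^2 c, ... *)
Definition rep_seq alpha (r : 'I_#|F|.-1 -> nat) n (c : 'rV[F]_n) : seq F :=
  flatten [seq flatten (nseq (r j) [seq alpha ^+ j.+1 * c 0 i | i <- enum 'I_n])
          | j <- enum 'I_#|F|.-1].

Definition rep alpha (r : 'I_#|F|.-1 -> nat) n (c : 'rV[F]_n) : 'rV[F]_(Rsum r * n) :=
  \row_(i < Rsum r * n) nth 0 (rep_seq alpha r c) i.

Definition rep_code alpha (r : 'I_#|F|.-1 -> nat) n (C : {vspace 'rV[F]_n})
  : {vspace 'rV[F]_(Rsum r * n)} :=
  (linfun (@rep alpha r n) @: C)%VS.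

End Codes.

(* Main.v *)
Require Import Defs.
From HB Require Import structures.
From mathcomp Require Import all_boot all_order all_algebra all_field.
Import GRing.Theory.
Local Open Scope ring_scope.
Set Implicit Arguments. Unset Strict Implicit. Unset Printing Implicit Defensive.

Section A.
Variable F : finFieldType.
Variable alpha : F.
Hypothesis halpha : (#|F|.-1).-primitive_root alpha.

Lemma q_gt1 : (1 < #|F|)%N.
Proof. exact: finNzRing_gt1. Qed.

Lemma qm1_gt0 : (0 < #|F|.-1)%N.
Proof. by have := q_gt1; case: #|F| => [|[|m]]. Qed.

Lemma alpha_neq0 : alpha != 0.
Proof.
apply/eqP=> a0; have := prim_expr_order halpha; rewrite a0 expr0n.
by have := qm1_gt0; case: (#|F|.-1) => //= m _ /eqP; rewrite eq_sym oner_eq0.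
Qed.

Lemma nz_pow (x : F) : x != 0 -> exists i : 'I_#|F|.-1, x = alpha ^+ i.+1.
Proof.
move=> nx.
have xq : x ^+ #|F|.-1 = 1.
  apply: (mulfI nx); rewrite mulr1 -exprS prednK ?expf_card //.
  by apply: ltnW; apply: q_gt1.
have [i ->] := prim_rootP halpha xq.
case: i => m Hi; case: m Hi => [|i] Hi.
  have Hq : (#|F|.-1.-1 < #|F|.-1)%N by rewrite ltn_predL qm1_gt0.
  exists (Ordinal Hq) => /=; rewrite prednK ?qm1_gt0 //.
  by rewrite (prim_expr_order halpha) expr0.
have Hi' : (i < #|F|.-1)%N by apply: ltnW.
by exists (Ordinal Hi').
Qed.

End A.

Section B.
Variable F : finFieldType.
Variable n : nat.
Implicit Types c : 'rV[F]_n.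

Lemma cnt_le c b : (cnt c b <= n)%N.
Proof. by rewrite /cnt -[X in (_ <= X)%N]card_ord max_card. Qed.

Lemma cnt_scale (a : F) c b : a != 0 -> cnt (a *: c) b = cnt c (b / a).
Proof.
move=> na; rewrite /cnt; apply: eq_card => i; rewrite !inE mxE.
apply/eqP/eqP => [<-|->]; first by rewrite [a * _]mulrC mulfK.
by rewrite mulrC divfK.
Qed.

Lemma wt_cnt0 c : (wt c + cnt c 0%R)%N = n.
Proof.
rewrite /wt /cnt -[RHS]card_ord -(cardsC [set i | c 0 i != 0]); congr addn.
by apply: eq_card => i; rewrite !inE negbK.
Qed.

Lemma card_set_sum (T : finType) (P : pred T) : #|[set i | P i]| = (\sum_i (P i : nat))%N.
Proof. by rewrite -sum1dep_card big_mkcond; apply: eq_bigr => i _; case: (P i). Qed.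

Lemma wt_cnt c : wt c = (\sum_(g : F | g != 0%R) cnt c g)%N.
Proof.
rewrite /wt /cnt card_set_sum.
under [RHS]eq_bigr => g _ do rewrite card_set_sum.
rewrite (exchange_big_dep (fun _ => true)) //=.
apply: eq_bigr => i _.
have [z|nz] := eqVneq (c 0 i) 0.
  rewrite z big1 // => g /andP [gnz _].
  by rewrite eq_sym (negPf gnz).
rewrite (bigD1 (c 0 i)) ?nz //= eqxx big1 ?addn0 // => g /andP [_ ne].
by rewrite eq_sym (negPf ne).
Qed.

Lemma wt_eq0 c : wt c = 0%N -> c = 0.
Proof.
move=> /eqP; rewrite /wt cards_eq0 => /eqP H; apply/rowP => i; rewrite mxE.
apply/eqP; apply: contraT => nz.
have : i \in [set i | c 0 i != 0] by rewrite inE.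
by rewrite H inE.
Qed.

Lemma wt_scale (a : F) c : a != 0 -> wt (a *: c) = wt c.
Proof.
move=> na; rewrite /wt; apply: eq_card => i; rewrite !inE mxE mulf_eq0.
by rewrite (negPf na).
Qed.

End B.
Section C.
Variable F : finFieldType.
Variable alpha : F.
Variable r : 'I_#|F|.-1 -> nat.
Variable n : nat.

Definition idx : seq ('I_#|F|.-1 * 'I_n) :=
  flatten [seq flatten (nseq (r j) [seq (j, i) | i <- enum 'I_n]) | j <- enum 'I_#|F|.-1].
Definition fr (c : 'rV[F]_n) (p : 'I_#|F|.-1 * 'I_n) := alpha ^+ p.1.+1 * c 0 p.2.

Lemma rep_seqE c : rep_seq alpha r c = map (fr c) idx.
Proof.
rewrite /rep_seq /idx map_flatten; congr flatten; rewrite -[in RHS]map_comp. apply: eq_map => j /=.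
by rewrite map_flatten map_nseq -map_comp.
Qed.

Lemma size_idx : size idx = (Rsum r * n)%N.
Proof.
rewrite size_flatten /shape -map_comp sumnE big_map big_enum /= /Rsum big_distrl /=.
apply: eq_bigr => j _; rewrite size_flatten /shape map_nseq sumn_nseq size_map size_enum_ord.
by rewrite mulnC.
Qed.

Lemma nth_map_ex (T : Type) (s : seq T) i :
  (i < size s)%N -> exists p, forall f : T -> F, nth 0 (map f s) i = f p.
Proof.
elim: s i => [|x s IH] [|i] //= Hi; first by exists x.
exact: IH.
Qed.

Lemma repE (i : 'I_(Rsum r * n)) :
  exists p, forall c, rep alpha r c 0 i = fr c p.
Proof.
have Hi : (i < size idx)%N by rewrite size_idx.
have [p Hp] := nth_map_ex Hi.
by exists p => c; rewrite mxE rep_seqE Hp.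
Qed.

Lemma rep_is_linear : linear (@rep F alpha r n).
Proof.
move=> a u v; apply/rowP => i; have [p Hp] := repE i.
rewrite Hp; move: (Hp u) (Hp v); move: (rep alpha r u) (rep alpha r v) => U V HU HV.
by rewrite !mxE HU HV /fr !mxE mulrDr mulrCA.
Qed.

End C.

HB.instance Definition _ (F : finFieldType) (alpha : F) r n :=
  GRing.isLinear.Build F 'rV[F]_n 'rV[F]_(Rsum r * n) *:%R (@rep F alpha r n)
    (@rep_is_linear F alpha r n).

Lemma lfun_rep (F : finFieldType) (alpha : F) r n (c : 'rV[F]_n) :
  linfun (@rep F alpha r n) c = rep alpha r c.
Proof. by rewrite lfunE. Qed.

Lemma card_nth (T : eqType) (x0 : T) (s : seq T) m (P : pred T) :
  size s = m -> #|[set i : 'I_m | P (nth x0 s i)]| = count P s.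
Proof.
move=> <-; rewrite card_set_sum -sum1_count (big_nth x0) big_mkord [RHS]big_mkcond.
by apply: eq_bigr => i _; case: (P _).
Qed.

Lemma count_enum_ord m (P : pred 'I_m) : count P (enum 'I_m) = #|[set i | P i]|.
Proof.
rewrite -sum1_count big_enum_cond -sum1dep_card; by apply: eq_bigl => i.
Qed.

Lemma cnt_rep (F : finFieldType) (alpha : F) r n (c : 'rV[F]_n) b :
  alpha != 0 ->
  cnt (rep alpha r c) b = (\sum_(j < #|F|.-1) r j * cnt c (b / alpha ^+ j.+1))%N.
Proof.
move=> na; rewrite /cnt.
have -> : [set i | rep alpha r c 0 i == b] =
   [set i : 'I_(Rsum r * n) | pred1 b (nth 0 (rep_seq alpha r c) i)].
  by apply/setP => i; rewrite !inE mxE.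
rewrite card_nth; last by rewrite rep_seqE size_map size_idx.
rewrite count_flatten sumnE !big_map enumT /=.
apply: eq_bigr => j _.
rewrite count_flatten map_nseq sumn_nseq count_map -enumT count_enum_ord mulnC.
congr (_ * _)%N; apply: eq_card => i; rewrite !inE /=.
have nz : alpha ^+ j.+1 != 0 by rewrite expf_neq0.
apply/eqP/eqP => [<-|->]; first by rewrite [_ * c 0 i]mulrC mulfK.
by rewrite mulrC divfK.
Qed.

Lemma wt_rep (F : finFieldType) (alpha : F) r n (c : 'rV[F]_n) :
  alpha != 0 -> wt (rep alpha r c) = (Rsum r * wt c)%N.
Proof.
move=> na.
have h1 := wt_cnt0 (rep alpha r c); have h2 := wt_cnt0 c.
rewrite cnt_rep // in h1.
have e : (\sum_(j < #|F|.-1) r j * cnt c (0%R / alpha ^+ j.+1))%N = (Rsum r * cnt c 0%R)%N.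
  by rewrite /Rsum big_distrl; apply: eq_bigr => j _; rewrite mul0r.
rewrite e in h1.
apply/eqP; rewrite -(eqn_add2r (Rsum r * cnt c 0%R)) h1 -mulnDr h2 //.
Qed.

Lemma digits m N (x y : 'I_m -> nat) :
  (forall j, x j < N)%N -> (forall j, y j < N)%N ->
  (\sum_(j < m) N ^ j * x j = \sum_(j < m) N ^ j * y j)%N -> forall j, x j = y j.
Proof.
elim: m x y => [|m IH] x y hx hy; first by move=> _ [].
rewrite !big_ord_recl /= !expn0 !mul1n.
under eq_bigr => i _ do rewrite /bump /= add1n expnS -mulnA.
under [in X in _ = X]eq_bigr => i _ do rewrite /bump /= add1n expnS -mulnA.
rewrite -!big_distrr /= => H.
have Npos : (0 < N)%N by apply: leq_ltn_trans (hx ord0).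
have key : forall a S, (a < N)%N -> ((a + N * S) %% N)%N = a.
  by move=> a S ha; rewrite addnC mulnC modnMDl modn_small.
have e0 : x ord0 = y ord0.
  by have := congr1 (modn^~ N) H; rewrite /= !key.
rewrite e0 in H; move/addnI/eqP: H; rewrite eqn_pmul2l // => /eqP H.
have IH' := IH (fun i => x (lift ord0 i)) (fun i => y (lift ord0 i)) (fun i => hx _) (fun i => hy _) H.
move=> j; case: (unliftP ord0 j) => [j' ->|->] //.
Qed.

Lemma mws_inj (F : finFieldType) n k (C : {vspace 'rV[F]_n}) :
  is_MWS k C -> forall a c, a \in C -> c \in C -> a != 0 -> wt a = wt c ->
  exists2 l : F, l != 0 & c = l *: a.
Proof.
move=> [[dimC _] nw] a c aC cC na wac.
set q := #|F|.
pose S := [set x : 'rV[F]_n | (x \in C) && (x != 0)].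
have cardS : #|S| = (q ^ k - 1)%N.
  have h := card_vspace C; rewrite dimC in h.
  have h2 : #|[set x in C]| = (q ^ k)%N by rewrite cardsE h.
  rewrite (cardsD1 0) inE mem0v add1n in h2.
  rewrite -h2 subn1 /=; apply: eq_card => x; rewrite !inE andbC.
  by [].
pose s := undup [seq w <- [seq wt x | x in [pred x | x \in C]] | w != 0%N].
have sizes : size s = ((q ^ k - 1) %/ (q - 1))%N by [].
have inS : forall x, x \in S -> wt x \in s.
  move=> x; rewrite inE => /andP [xC nx].
  rewrite mem_undup mem_filter; apply/andP; split.
    by apply: contra nx => /eqP /wt_eq0 ->.
  by apply: image_f.
have fromS : forall w, w \in s -> exists2 x, x \in S & wt x = w.
  move=> w; rewrite mem_undup mem_filter => /andP [nw0 /imageP [x xC wx]].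
  exists x => //; rewrite inE xC /=; apply: contra nw0 => /eqP x0.
  rewrite wx x0.
  by rewrite /wt; apply/eqP; apply: eq_card0 => i; rewrite !inE mxE eqxx.
pose fib w := [set x | (x \in S) && (wt x == w)].
have sum_fib : (\sum_(w <- s) #|fib w|)%N = #|S|.
  have -> : (\sum_(w <- s) #|fib w|)%N = (\sum_(w <- s) \sum_(x in S) (wt x == w : nat))%N.
    apply: eq_bigr => w _; rewrite card_set_sum [RHS]big_mkcond.
    by apply: eq_bigr => x _; case: (x \in S).
  rewrite (exchange_big_dep xpredT) //= -sum1_card [RHS]big_mkcond /=.
  apply: eq_bigr => x _; case xS: (x \in S); last by rewrite big_pred0.
  rewrite (eq_bigr (fun i => if wt x == i then 1%N else 0%N)); last by move=> i _; case: (_ == _).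
  rewrite -big_mkcond /= sum1_count.
  have := count_uniq_mem (wt x) (undup_uniq _ : uniq s); rewrite inS //.
  move=> H; transitivity (count_mem (wt x) s); last by rewrite H.
  by apply: eq_count => w /=; rewrite eq_sym.
pose O (x : 'rV[F]_n) := [set l *: x | l in [set~ (0 : F)]].
have cardO : forall x, x != 0 -> #|O x| = q.-1.
  move=> x nx; rewrite card_imset ?cardsC1 // => l m /eqP.
  by rewrite -subr_eq0 -scalerBl scaler_eq0 (negPf nx) orbF subr_eq0 => /eqP.
have subO : forall x, x \in S -> O x \subset fib (wt x).
  move=> x; rewrite inE => /andP [xC nx]; apply/subsetP => y /imsetP [l].
  rewrite in_setC1 => nl ->; rewrite !inE memvZ //= scaler_eq0 negb_or nl nx.
  by rewrite wt_scale // eqxx.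
have lower : forall w, w \in s -> (q.-1 <= #|fib w|)%N.
  move=> w /fromS [x xS <-]; rewrite -(cardO x); first exact: subset_leq_card (subO _ xS).
  by move: xS; rewrite inE => /andP [].
have aS : a \in S by rewrite inE aC.
case: (boolP (c \in O a)) => [/imsetP [l]|nc].
  by rewrite in_setC1 => nl ->; exists l.
have cS : c \in S.
  rewrite inE cC /=; apply: contra na => /eqP c0; apply/eqP/wt_eq0.
  by rewrite wac c0; apply/eqP; rewrite cards_eq0; apply/eqP/setP => i; rewrite !inE mxE eqxx.
have upper : (q <= #|fib (wt a)|)%N.
  have : c |: O a \subset fib (wt a).
    by rewrite subUset sub1set (subO _ aS) andbT inE cS /= wac.
  move/subset_leq_card; apply: leq_trans.
  by rewrite cardsU1 nc cardO // add1n prednK // ltnW // finNzRing_gt1.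
have : (\sum_(w <- s) (#|fib w| - q.-1))%N = 0%N.
  have e1 : (\sum_(w <- s) #|fib w|)%N = (size s * q.-1 + \sum_(w <- s) (#|fib w| - q.-1))%N.
    have -> : (size s * q.-1)%N = (\sum_(w <- s) q.-1)%N.
      by rewrite big_const_seq count_predT iter_addn_0 mulnC.
    rewrite -big_split /=.
    rewrite [LHS]big_seq [RHS]big_seq; apply: eq_bigr => w ws.
    by rewrite subnKC // lower.
  have e2 : (size s * q.-1)%N = #|S|.
    rewrite sizes cardS subn1 predn_exp -subn1 divnK //.
    by rewrite dvdn_mulr.
  by move: e1; rewrite sum_fib -{1}e2 => /eqP; rewrite -{1}[(size s * _)%N]addn0 eqn_add2l eq_sym => /eqP.
move/eqP; rewrite sum_nat_seq_eq0 => /allP /(_ (wt a) (inS _ aS)) /=.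
rewrite subn_eq0 => H.
by have := leq_trans upper H; rewrite leqNgt ltn_predL (ltnW (finNzRing_gt1 F)).
Qed.

Lemma uniq_map_inj (T1 T2 : eqType) (f : T1 -> T2) s x y :
  uniq (map f s) -> x \in s -> y \in s -> f x = f y -> x = y.
Proof.
elim: s => [|z s IH] //= /andP [nz us]; rewrite !inE.
case/orP => [/eqP ->|xs]; case/orP => [/eqP ->|ys] // e.
- by move: nz; rewrite e map_f.
- by move: nz; rewrite -e map_f.
- exact: IH.
Qed.

Section D.
Variable F : finFieldType.
Variable alpha : F.
Hypothesis halpha : (#|F|.-1).-primitive_root alpha.

Definition Lst : seq F := rcons [seq alpha ^+ i.+1 | i <- iota 0 #|F|.-1] 0.

Lemma Vvec_map n (c : 'rV[F]_n) : Vvec alpha c = map (cnt c) Lst.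
Proof. by rewrite /Vvec /Lst map_rcons -map_comp. Qed.

Lemma memL x : x \in Lst.
Proof.
rewrite /Lst mem_rcons inE; case: eqP => //= /eqP nx.
have [i ->] := nz_pow halpha nx.
by apply: map_f; rewrite mem_iota /= add0n.
Qed.

Lemma cnt_inj n (c : 'rV[F]_n) : uniq (Vvec alpha c) -> injective (cnt c).
Proof.
rewrite Vvec_map => u x y e; exact: (uniq_map_inj u (memL x) (memL y) e).
Qed.

End D.

Lemma wt0 (F : finFieldType) n : wt (0 : 'rV[F]_n) = 0%N.
Proof. by apply/eqP; rewrite cards_eq0; apply/eqP/setP => i; rewrite !inE mxE eqxx. Qed.

Lemma mem_rep_code (F : finFieldType) (alpha : F) r n (C : {vspace 'rV[F]_n}) x :
  reflect (exists2 c, c \in C & x = rep alpha r c) (x \in rep_code alpha r C).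
Proof.
apply: (iffP memv_imgP) => [[c cC ->]|[c cC ->]]; exists c => //; by rewrite lfun_rep.
Qed.

Theorem mainTheorem9 (F : finFieldType) (alpha : F)
  (halpha : (#|F|.-1).-primitive_root alpha)
  (n k : nat) (C : {vspace 'rV[F]_n}) :
  is_MWS k C -> propB alpha C ->
  exists r : 'I_#|F|.-1 -> nat,
    (exists j, r j != 0%N) /\
    is_MWS k (rep_code alpha r C) /\
    propA (rep_code alpha r C) /\ propB alpha (rep_code alpha r C).
Proof.
move=> mws pB.
have na := alpha_neq0 halpha.
pose N := n.+1.
pose r := fun j : 'I_#|F|.-1 => (N ^ j)%N.
pose j0 := Ordinal (qm1_gt0 F).
have Rpos : (0 < Rsum r)%N.
  by rewrite /Rsum (bigD1 j0) //= ltn_addr // expn_gt0.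
have wtr : forall c : 'rV[F]_n, wt (rep alpha r c) = (Rsum r * wt c)%N by move=> c; apply: wt_rep.
have rep_inj : injective (@rep F alpha r n).
  move=> x y e; apply/eqP; rewrite -subr_eq0; apply/eqP/wt_eq0.
  apply/eqP; rewrite -(eqn_pmul2l Rpos) muln0 -wtr raddfB /= e subrr wt0 //.
have cntr : forall (c : 'rV[F]_n) b,
    cnt (rep alpha r c) b = (\sum_(j < #|F|.-1) N ^ j * cnt c (b / alpha ^+ j.+1))%N.
  by move=> c b; rewrite cnt_rep.
have cnt_lt : forall (c : 'rV[F]_n) b, (cnt c b < N)%N by move=> c b; rewrite ltnS cnt_le.
have digs : forall (a c : 'rV[F]_n) x y, cnt (rep alpha r a) x = cnt (rep alpha r c) y ->
    forall j : 'I_#|F|.-1, cnt a (x / alpha ^+ j.+1) = cnt c (y / alpha ^+ j.+1).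
  move=> a c x y; rewrite !cntr => e j.
  exact: (digits (fun j => cnt_lt _ _) (fun j => cnt_lt _ _) e j).
exists r; split; first by exists j0; rewrite /r expn_eq0.
split.
  case: mws => [[dimC ndC] nwC]; split; first split.
  - rewrite /rep_code limg_dim_eq ?dimC //.
    have /eqP -> : lker (linfun (@rep F alpha r n)) == 0%VS.
      by apply/lker0P => x y; rewrite !lfun_rep; apply: rep_inj.
    by rewrite capv0.
  - move=> k2 i; have [p Hp] := repE alpha i.
    have [c cC cp] := ndC k2 p.2.
    exists (rep alpha r c); first by apply/mem_rep_code; exists c.
    by rewrite Hp /fr mulf_neq0 // expf_neq0.
  rewrite -nwC /num_weights -[RHS](size_map (muln (Rsum r))); apply: perm_size.
  apply: uniq_perm; first exact: undup_uniq.
    rewrite map_inj_uniq ?undup_uniq // => x y /eqP.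
    by rewrite eqn_pmul2l // => /eqP.
  move=> w; rewrite mem_undup mem_filter; apply/andP/mapP.
    case=> nw /imageP [x]; rewrite inE => /mem_rep_code [c cC xe] we; subst x w.
    rewrite wtr in nw *; exists (wt c) => //.
    rewrite mem_undup mem_filter; apply/andP; split.
      by apply: contra nw => /eqP ->; rewrite muln0.
    by apply: image_f; rewrite inE.
  case=> w'; rewrite mem_undup mem_filter => /andP [nw' /imageP [c cC e]] ->; subst w'.
  split; first by rewrite muln_eq0 negb_or nw' andbT -lt0n Rpos.
  rewrite -wtr; apply: image_f; rewrite inE; apply/mem_rep_code; exists c => //.
split.
  exists 1; first exact: oner_neq0.
  move=> a' c' /mem_rep_code [a aC ->] /mem_rep_code [c cC ->] e.
  have hd := digs _ _ _ _ e.
  have hnz : forall g : F, g != 0 -> cnt a g = cnt c g.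
    move=> g ng; have [i hi] := nz_pow halpha (invr_neq0 ng).
    by have := hd i; rewrite -hi div1r invrK.
  have ew : wt a = wt c by rewrite !wt_cnt; apply: eq_bigr => g ng; apply: hnz.
  have [a0|nza] := eqVneq a 0.
    by move: ew; rewrite a0 wt0 => /esym/wt_eq0 ->.
  have [l nl ecl] := mws_inj mws aC cC nza ew.
  have u := pB a aC nza.
  have : cnt a 1 = cnt a (1 / l) by rewrite -cnt_scale // -ecl -hnz ?oner_neq0.
  move/(cnt_inj halpha u) => /eqP; rewrite eq_sym div1r invr_eq1 => /eqP l1.
  by rewrite ecl l1 scale1r.
move=> x /mem_rep_code [a aC ->] nx.
have nza : a != 0 by apply: contraNneq nx => ->; rewrite linear0.
have u := pB a aC nza.
rewrite Vvec_map map_inj_uniq; first by move: u; rewrite Vvec_map => /map_uniq.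
move=> x1 y1 e.
have := digs _ _ _ _ e j0; move/(cnt_inj halpha u).
by move/(mulIf (invr_neq0 (expf_neq0 _ na))).
Qed.
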